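(* Let $(\mathbb{C},P)$ be an extensional, cauchy-complete tripos with full comprehensions and strong power objects. Then $(\mathbb{C},P)$ has effective quotients. Explicitly, for an equivalence relation $\rho$ on $A$, the quotient $A/\rho$ may be taken to be the domain of the comprehension $\lfloor\sigma\rfloor$ of $\sigma=\exists_{\pi_2}\big(\in_A\wedge\forall_{\langle\pi_1,\pi_3\rangle}(\langle\pi_1,\pi_2\rangle^*\rho\leftrightarrow\langle\pi_2,\pi_3\rangle^*\in_A)\big)\in P(\mathbb{P}A)$ (a formula expressing that an element of $\mathbb{P}A$ is the $\rho$-class of some element of $A$).
   Context: A tripos $(\mathbb{C},P)$: $\mathbb{C}$ non-empty with binary products, $P:\mathbb{C}^{op}\to$ Heyting algebras, reindexings $f^*$ Heyting homomorphisms with left adjoints $\exists_f$ (Beck–Chevalley, Frobenius) and right adjoints $\forall_f$ (Beck–Chevalley), and weak power objects ($\mathbb{P}X$, $\in_X\in P(X\times\mathbb{P}X)$ with every $\gamma\in P(X\times Y)$ of the form $(id_X\times\{\gamma\})^*\in_X$). $\delta_A=\exists_{\langle id,id\rangle}\top_A$. Strong power objects: every $A$ has a weak power object $\mathbb{P}A$ with $\delta_{\mathbb{P}A}=\forall_{\langle\pi_2,\pi_3\rangle}(\langle\pi_1,\pi_2\rangle^*\in_A\leftrightarrow\langle\pi_1,\pi_3\rangle^*\in_A)$. Extensional: $f=g$ iff $\top\le\langle f,g\rangle^*\delta$. Cauchy-complete: every $F\in P(Y\times A)$ with $\top_Y\le\exists_{\pi_1}F$ and $\langle\pi_1,\pi_2\rangle^*F\wedge\langle\pi_1,\pi_3\rangle^*F\le\langle\pi_2,\pi_3\rangle^*\delta_A$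 equals $(f\times id_A)^*\delta_A$ for some $f:Y\to A$. Full comprehension of $\alpha\in P(A)$: $\lfloor\alpha\rfloor:X\to A$ with $\lfloor\alpha\rfloor^*\alpha=\top$, universal among $f$ with $f^*\alpha=\top$, and $\lfloor\alpha\rfloor^*\alpha\le\lfloor\alpha\rfloor^*\beta$ iff $\alpha\le\beta$. Equivalence relation on $A$: $\rho\in P(A\times A)$, $\delta_A\le\rho$, symmetric and transitive internally. Effective quotient: $q:A\to A/\rho$ with $\rho=(q\times q)^*\delta_{A/\rho}$, universal among $f:A\to Y$ with $\rho\le(f\times f)^*\delta_Y$. *)

(* Defs.v *)
Set Implicit Arguments.
Unset Strict Implicit.

Record PCat := {
  Ob : Type;
  Hom : Ob -> Ob -> Type;
  idm : forall A, Hom A A;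
  comp : forall A B C, Hom B C -> Hom A B -> Hom A C;
  comp_id_l : forall A B (f : Hom A B), comp (idm B) f = f;
  comp_id_r : forall A B (f : Hom A B), comp f (idm A) = f;
  comp_assoc : forall A B C D (f : Hom A B) (g : Hom B C) (h : Hom C D),
      comp h (comp g f) = comp (comp h g) f;
  prod : Ob -> Ob -> Ob;
  p1 : forall A B, Hom (prod A B) A;
  p2 : forall A B, Hom (prod A B) B;
  pair : forall X A B, Hom X A -> Hom X B -> Hom X (prod A B);
  pair_p1 : forall X A B (f : Hom X A) (g : Hom X B), comp (p1 A B) (pair f g) = f;
  pair_p2 : forall X A B (f : Hom X A) (g : Hom X B), comp (p2 A B) (pair f g) = g;
  pair_uniq : forall X A B (f : Hom X A) (g : Hom X B) (h : Hom X (prod A B)),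
      comp (p1 A B) h = f -> comp (p2 A B) h = g -> h = pair f g
}.

Arguments Hom p : clear implicits.
Arguments idm {p} A : rename.
Arguments comp {p A B C} g f : rename.
Arguments prod {p} A B : rename.
Arguments p1 {p A B} : rename.
Arguments p2 {p A B} : rename.
Arguments pair {p X A B} f g : rename.

Section CatDefs.
Context {C : PCat}.

Definition fx {A B A' B' : Ob C} (f : Hom C A A') (g : Hom C B B')
  : Hom C (prod A B) (prod A' B') := pair (comp f p1) (comp g p2).

Definition pi1 {X Y Z : Ob C} : Hom C (prod (prod X Y) Z) X := comp p1 p1.
Definition pi2 {X Y Z : Ob C} : Hom C (prod (prod X Y) Z) Y := comp p2 p1.
Definition pi3 {X Y Z : Ob C} : Hom C (prod (prod X Y) Z) Z := p2.

Definition is_pullback {A B D E : Ob C} (f : Hom C A B) (g : Hom C D B)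
    (p : Hom C E A) (q : Hom C E D) : Prop :=
  comp f p = comp g q /\
  forall (W : Ob C) (u : Hom C W A) (v : Hom C W D), comp f u = comp g v ->
    exists! w : Hom C W E, comp p w = u /\ comp q w = v.
End CatDefs.

Record HA := {
  car :> Type;
  le : car -> car -> Prop;
  top : car; bot : car;
  meet : car -> car -> car; join : car -> car -> car; imp : car -> car -> car;
  le_refl : forall a, le a a;
  le_trans : forall a b c, le a b -> le b c -> le a c;
  le_antisym : forall a b, le a b -> le b a -> a = b;
  top_max : forall a, le a top;
  bot_min : forall a, le bot a;
  meet_glb : forall a b c, le c (meet a b) <-> (le c a /\ le c b);
  join_lub : forall a b c, le (join a b) c <-> (le a c /\ le b c);
  imp_adj : forall a b c, le c (imp a b) <-> le (meet c a) b
}.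
Arguments le {h} a b.
Arguments top {h}.
Arguments bot {h}.
Arguments meet {h} a b.
Arguments join {h} a b.
Arguments imp {h} a b.

Definition biimp {H : HA} (a b : H) : H := meet (imp a b) (imp b a).

Record TriposData (C : PCat) := {
  P : Ob C -> HA;
  rdx : forall A B : Ob C, Hom C A B -> P B -> P A;
  ex : forall A B : Ob C, Hom C A B -> P A -> P B;
  all : forall A B : Ob C, Hom C A B -> P A -> P B
}.
Arguments P {C} t A.
Arguments rdx {C t A B} f phi.
Arguments ex {C t A B} f phi.
Arguments all {C t A B} f phi.

Section TriposDefs.
Context {C : PCat} {T : TriposData C}.

Definition is_weak_power (X PX : Ob C) (inX : P T (prod X PX)) : Prop :=
  forall (Y : Ob C) (g : P T (prod X Y)), exists c : Hom C Y PX,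
    g = rdx (fx (idm X) c) inX.

Record is_tripos : Prop := {
  nonempty : inhabited (Ob C);
  rdx_id : forall A (phi : P T A), rdx (idm A) phi = phi;
  rdx_comp : forall A B D (f : Hom C A B) (g : Hom C B D) (phi : P T D),
      rdx (comp g f) phi = rdx f (rdx g phi);
  rdx_top : forall A B (f : Hom C A B), rdx f (@top (P T B)) = top;
  rdx_bot : forall A B (f : Hom C A B), rdx f (@bot (P T B)) = bot;
  rdx_meet : forall A B (f : Hom C A B) (a b : P T B), rdx f (meet a b) = meet (rdx f a) (rdx f b);
  rdx_join : forall A B (f : Hom C A B) (a b : P T B), rdx f (join a b) = join (rdx f a) (rdx f b);
  rdx_imp : forall A B (f : Hom C A B) (a b : P T B), rdx f (imp a b) = imp (rdx f a) (rdx f b);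
  ex_adj : forall A B (f : Hom C A B) (a : P T A) (b : P T B), le (ex f a) b <-> le a (rdx f b);
  all_adj : forall A B (f : Hom C A B) (a : P T A) (b : P T B), le (rdx f b) a <-> le b (all f a);
  frobenius : forall A B (f : Hom C A B) (a : P T A) (b : P T B),
      ex f (meet a (rdx f b)) = meet (ex f a) b;
  bc_ex : forall A B D E (f : Hom C A B) (g : Hom C D B) (p : Hom C E A) (q : Hom C E D),
      is_pullback f g p q -> forall a : P T A, rdx g (ex f a) = ex q (rdx p a);
  bc_all : forall A B D E (f : Hom C A B) (g : Hom C D B) (p : Hom C E A) (q : Hom C E D),
      is_pullback f g p q -> forall a : P T A, rdx g (all f a) = all q (rdx p a);
  weak_powers : forall X : Ob C, exists (PX : Ob C) (inX : P T (prod X PX)), is_weak_power inX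
}.

Definition delta (A : Ob C) : P T (prod A A) := ex (pair (idm A) (idm A)) top.

Definition is_strong_power (X PX : Ob C) (inX : P T (prod X PX)) : Prop :=
  is_weak_power inX /\
  delta PX = all (pair (@pi2 C X PX PX) pi3)
                 (biimp (rdx (pair (@pi1 C X PX PX) pi2) inX) (rdx (pair (@pi1 C X PX PX) pi3) inX)).

Definition has_strong_power_objects : Prop :=
  forall A : Ob C, exists (PA : Ob C) (inA : P T (prod A PA)), is_strong_power inA.

Definition extensional : Prop :=
  forall (X A : Ob C) (f g : Hom C X A), f = g <-> le top (rdx (pair f g) (delta A)).

Definition cauchy_complete : Prop :=
  forall (Y A : Ob C) (F : P T (prod Y A)),
    le top (ex p1 F) ->
    le (meet (rdx (pair (@pi1 C Y A A) pi2) F) (rdx (pair (@pi1 C Y A A) pi3) F))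
       (rdx (pair (@pi2 C Y A A) pi3) (delta A)) ->
    exists f : Hom C Y A, F = rdx (fx f (idm A)) (delta A).

Definition is_full_comprehension (A : Ob C) (alpha : P T A) (X : Ob C) (m : Hom C X A) : Prop :=
  rdx m alpha = top /\
  (forall (Y : Ob C) (f : Hom C Y A), rdx f alpha = top ->
     exists! g : Hom C Y X, comp m g = f) /\
  (forall beta : P T A, le (rdx m alpha) (rdx m beta) <-> le alpha beta).

Definition has_full_comprehensions : Prop :=
  forall (A : Ob C) (alpha : P T A), exists (X : Ob C) (m : Hom C X A),
    is_full_comprehension alpha m.

Definition equiv_rel (A : Ob C) (rho : P T (prod A A)) : Prop :=
  le (delta A) rho /\
  le rho (rdx (pair p2 p1) rho) /\
  le (meet (rdx (pair (@pi1 C A A A) pi2) rho) (rdx (pair (@pi2 C A A A) pi3) rho))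
     (rdx (pair (@pi1 C A A A) pi3) rho).

Definition is_effective_quotient (A : Ob C) (rho : P T (prod A A)) (Q : Ob C) (q : Hom C A Q) : Prop :=
  rho = rdx (fx q q) (delta Q) /\
  forall (Y : Ob C) (f : Hom C A Y), le rho (rdx (fx f f) (delta Y)) ->
    exists! g : Hom C Q Y, comp g q = f.

Definition has_effective_quotients : Prop :=
  forall (A : Ob C) (rho : P T (prod A A)), equiv_rel rho ->
    exists (Q : Ob C) (q : Hom C A Q), is_effective_quotient rho q.

Definition class_pred (A PA : Ob C) (inA : P T (prod A PA)) (rho : P T (prod A A)) : P T PA :=
  ex (@p2 C A PA)
     (meet inA
        (all (pair (@pi1 C A A PA) pi3)
             (biimp (rdx (pair (@pi1 C A A PA) pi2) rho) (rdx (pair (@pi2 C A A PA) pi3) inA)))).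

End TriposDefs.
Arguments is_tripos {C} T.
Arguments extensional {C} T.
Arguments cauchy_complete {C} T.
Arguments has_full_comprehensions {C} T.
Arguments has_strong_power_objects {C} T.
Arguments has_effective_quotients {C} T.

(* Main.v *)
Require Import Defs.
From Stdlib Require Import Setoid.

Section Cat.
Context {C : PCat}.

Lemma comp_pair {X Y A B : Ob C} (f : Hom C Y A) (g : Hom C Y B) (h : Hom C X Y) :
  comp (pair f g) h = pair (comp f h) (comp g h).
Proof. apply pair_uniq; rewrite comp_assoc; [rewrite pair_p1|rewrite pair_p2]; reflexivity. Qed.

Lemma pair_eta {X A B : Ob C} (h : Hom C X (prod A B)) : pair (comp p1 h) (comp p2 h) = h.
Proof. symmetry; apply pair_uniq; reflexivity. Qed.

Lemma pair_ext {X A B : Ob C} (h h' : Hom C X (prod A B)) :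
  comp p1 h = comp p1 h' -> comp p2 h = comp p2 h' -> h = h'.
Proof. intros E1 E2. rewrite <- (pair_eta h'). apply pair_uniq; assumption. Qed.

Lemma pair_p1p2 {A B : Ob C} : pair (@p1 C A B) p2 = idm _.
Proof. apply pair_ext; rewrite ?pair_p1, ?pair_p2, comp_id_r; reflexivity. Qed.
End Cat.

Ltac csimp := unfold fx, pi1, pi2, pi3 in *;
  repeat progress (rewrite <- ?comp_assoc, ?pair_p1, ?pair_p2, ?comp_pair, ?comp_id_l, ?comp_id_r, ?pair_p1p2, ?pair_eta).
Ltac csimp_in H := unfold fx, pi1, pi2, pi3 in H;
  repeat progress (rewrite <- ?comp_assoc, ?pair_p1, ?pair_p2, ?comp_pair, ?comp_id_l, ?comp_id_r, ?pair_p1p2, ?pair_eta in H).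
Ltac ceq := csimp; repeat (apply pair_ext; csimp); try reflexivity; try solve [auto].

Section PB.
Context {C : PCat}.
Definition PBP {E Z : Ob C} (pi : Hom C E Z) : Prop :=
  forall (W : Ob C) (f : Hom C W Z), exists (E' : Ob C) (p' : Hom C E' E) (q' : Hom C E' W),
    is_pullback pi f p' q'.

Lemma pb_p2 (B Z : Ob C) : PBP (@p2 C B Z).
Proof.
  intros W f. exists (prod B W), (pair p1 (comp f p2)), p2. split.
  - ceq.
  - intros W' u v Huv. exists (pair (comp p1 u) v). split.
    + split; [ceq; rewrite Huv; reflexivity | ceq].
    + intros w [E1 E2]. apply pair_ext; csimp.
      * rewrite <- E1. ceq.
      * auto.
Qed.

Lemma pb_13 (A A' B : Ob C) : PBP (pair (@pi1 C A A' B) pi3).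
Proof.
  intros W f. exists (prod W A'), (pair (pair (comp p1 (comp f p1)) p2) (comp p2 (comp f p1))), p1. split.
  - ceq.
  - intros W' u v Huv.
    assert (E1 := f_equal (comp p1) Huv). assert (E2 := f_equal (comp p2) Huv).
    csimp_in E1; csimp_in E2.
    exists (pair v (comp pi2 u)). split.
    + split; ceq; congruence.
    + intros w [F1 F2]. apply pair_ext; csimp; [auto|]. rewrite <- F1. ceq.
Qed.

Lemma pb_23 (A' A B : Ob C) : PBP (pair (@pi2 C A' A B) pi3).
Proof.
  intros W f. exists (prod W A'), (pair (pair p2 (comp p1 (comp f p1))) (comp p2 (comp f p1))), p1. split.
  - ceq.
  - intros W' u v Huv.
    assert (E1 := f_equal (comp p1) Huv). assert (E2 := f_equal (comp p2) Huv).
    csimp_in E1; csimp_in E2.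
    exists (pair v (comp pi1 u)). split.
    + split; ceq; congruence.
    + intros w [F1 F2]. apply pair_ext; csimp; [auto|]. rewrite <- F1. ceq.
Qed.
End PB.

Lemma eta3 {C : PCat} {V A B D : Ob C} (e : Hom C V (prod (prod A B) D)) :
  e = pair (pair (comp p1 (comp p1 e)) (comp p2 (comp p1 e))) (comp p2 e).
Proof. rewrite !pair_eta. reflexivity. Qed.

Lemma eta2 {C : PCat} {V A B : Ob C} (e : Hom C V (prod A B)) :
  e = pair (comp p1 e) (comp p2 e).
Proof. rewrite !pair_eta. reflexivity. Qed.

Ltac destr3 e :=
  let e1 := fresh "e" in let e2 := fresh "e" in let e3 := fresh "e" in
  let E1 := fresh in let E2 := fresh in let E3 := fresh in
  rewrite (eta3 e) in *;
  remember (comp p1 (comp p1 e)) as e1 eqn:E1; remember (comp p2 (comp p1 e)) as e2 eqn:E2;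
  remember (comp p2 e) as e3 eqn:E3; clear E1 E2 E3; clear e.

Ltac destr2 e :=
  let e1 := fresh "e" in let e2 := fresh "e" in
  let E1 := fresh in let E2 := fresh in
  rewrite (eta2 e) in *;
  remember (comp p1 e) as e1 eqn:E1; remember (comp p2 e) as e2 eqn:E2; clear E1 E2; clear e.

Ltac destr2n e e1 e2 :=
  let E1 := fresh in let E2 := fresh in
  rewrite (eta2 e) in *;
  remember (comp p1 e) as e1 eqn:E1; remember (comp p2 e) as e2 eqn:E2; clear E1 E2; clear e.

Ltac destr3n e e1 e2 e3 :=
  let E1 := fresh in let E2 := fresh in let E3 := fresh in
  rewrite (eta3 e) in *;
  remember (comp p1 (comp p1 e)) as e1 eqn:E1; remember (comp p2 (comp p1 e)) as e2 eqn:E2;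
  remember (comp p2 e) as e3 eqn:E3; clear E1 E2 E3; clear e.

Section Tri.
Context {C : PCat} {T : TriposData C} (HT : is_tripos T).

Definition Hd {W Z : Ob C} (f : Hom C W Z) (phi : P T Z) : Prop := le top (rdx f phi).

Lemma meet_l {H : HA} (a b : H) : le (meet a b) a.
Proof. apply (proj1 (proj1 (meet_glb a b (meet a b)) (le_refl _))). Qed.
Lemma meet_r {H : HA} (a b : H) : le (meet a b) b.
Proof. apply (proj2 (proj1 (meet_glb a b (meet a b)) (le_refl _))). Qed.

Lemma rdx_mono {W Z} (f : Hom C W Z) (a b : P T Z) : le a b -> le (rdx f a) (rdx f b).
Proof.
  intro Hab. assert (E : meet a b = a).
  { apply le_antisym. apply meet_l. apply meet_glb; split; [apply le_refl|exact Hab]. }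
  rewrite <- E, (rdx_meet HT). apply meet_r.
Qed.

Lemma Hd_comp {V W Z} (h : Hom C V W) (g : Hom C W Z) phi : Hd h (rdx g phi) <-> Hd (comp g h) phi.
Proof. unfold Hd; rewrite (rdx_comp HT); tauto. Qed.

Lemma Hd_pre {V W Z} (f : Hom C W Z) (h : Hom C V W) phi : Hd f phi -> Hd (comp f h) phi.
Proof. unfold Hd; intro H0; rewrite (rdx_comp HT), <- (rdx_top HT h). now apply rdx_mono. Qed.

Lemma Hd_mono {W Z} (f : Hom C W Z) (a b : P T Z) : le a b -> Hd f a -> Hd f b.
Proof. unfold Hd; intros H0 H1. eapply le_trans; [exact H1|]. now apply rdx_mono. Qed.

Lemma Hd_meet {W Z} (f : Hom C W Z) a b : Hd f (meet a b) <-> Hd f a /\ Hd f b.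
Proof. unfold Hd; rewrite (rdx_meet HT). apply meet_glb. Qed.

Lemma Hd_top_eq {W Z} (f : Hom C W Z) phi : Hd f phi <-> rdx f phi = top.
Proof. unfold Hd; split; intro H0; [apply le_antisym; [apply top_max|exact H0]|rewrite H0; apply le_refl]. Qed.

Hypothesis Hfc : has_full_comprehensions T.

Lemma key {Z} (phi psi : P T Z) : (forall V (h : Hom C V Z), Hd h phi -> Hd h psi) -> le phi psi.
Proof.
  intro H0. destruct (Hfc _ phi) as [X [m [Hm1 [_ Hm3]]]].
  apply Hm3. rewrite Hm1. apply H0. unfold Hd; rewrite Hm1; apply le_refl.
Qed.

Lemma Hd_biimp_intro {W Z} (f : Hom C W Z) a b :
  (forall V (h : Hom C V W), Hd (comp f h) a <-> Hd (comp f h) b) -> Hd f (biimp a b).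
Proof.
  intro H0. unfold biimp. apply Hd_meet; split; unfold Hd; rewrite (rdx_imp HT); apply imp_adj;
    eapply le_trans; try apply meet_r; apply key; intros V h; rewrite !Hd_comp; apply H0.
Qed.

Lemma Hd_biimp_elim {W Z} (f : Hom C W Z) a b : Hd f (biimp a b) -> (Hd f a <-> Hd f b).
Proof.
  unfold biimp; intro H0; apply Hd_meet in H0; destruct H0 as [H1 H2]; unfold Hd in *;
  rewrite (rdx_imp HT) in H1, H2; apply imp_adj in H1; apply imp_adj in H2;
  split; intro H3; [eapply le_trans; [|exact H1]|eapply le_trans; [|exact H2]];
  apply meet_glb; split; auto; apply le_refl.
Qed.

Lemma ex_intro' {V E Z} (pi : Hom C E Z) (e : Hom C V E) phi : Hd e phi -> Hd (comp pi e) (ex pi phi).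
Proof. intro H0. apply Hd_comp. eapply Hd_mono; [|exact H0]. apply (ex_adj HT), le_refl. Qed.

Lemma all_elim' {V W E Z} (pi : Hom C E Z) (f : Hom C W Z) (h : Hom C V W) (e : Hom C V E) phi :
  Hd f (all pi phi) -> comp pi e = comp f h -> Hd e phi.
Proof.
  intros H0 Heq. apply (Hd_pre f h) in H0. rewrite <- Heq in H0. apply Hd_comp in H0.
  eapply Hd_mono; [|exact H0]. apply (all_adj HT), le_refl.
Qed.

Lemma all_intro' {W E Z} (pi : Hom C E Z) (f : Hom C W Z) phi : PBP pi ->
  (forall V (h : Hom C V W) (e : Hom C V E), comp pi e = comp f h -> Hd e phi) -> Hd f (all pi phi).
Proof.
  intros Hpb H0. destruct (Hpb W f) as [E' [p' [q' Hp]]].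
  unfold Hd. rewrite (bc_all HT Hp). apply (all_adj HT). rewrite (rdx_top HT).
  apply H0 with (h := q'). apply Hp.
Qed.

Lemma ex_elim' {W E Z} (pi : Hom C E Z) (f : Hom C W Z) phi (psi : P T W) : PBP pi ->
  Hd f (ex pi phi) ->
  (forall V (h : Hom C V W) (e : Hom C V E), comp pi e = comp f h -> Hd e phi -> Hd h psi) -> le top psi.
Proof.
  intros Hpb H1 H0. destruct (Hpb W f) as [E' [p' [q' Hp]]].
  unfold Hd in H1. rewrite (bc_ex HT Hp) in H1. eapply le_trans; [exact H1|].
  apply (ex_adj HT). apply key. intros V u Hu. apply Hd_comp. apply Hd_comp in Hu.
  apply (H0 _ _ (comp p' u)); [|exact Hu]. rewrite !comp_assoc. f_equal. apply Hp.
Qed.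

End Tri.

Section Main.
Context {C : PCat} {T : TriposData C} (HT : is_tripos T).
Hypothesis Hext : extensional T.
Hypothesis Hcc : cauchy_complete T.
Hypothesis Hfc : has_full_comprehensions T.

Notation Hd := (@Hd C T).

Lemma Hd_delta {W Z : Ob C} (u v : Hom C W Z) : u = v <-> Hd (pair u v) (delta Z).
Proof. apply Hext. Qed.

Variables (A : Ob C) (rho : P T (prod A A)) (Hrho : equiv_rel rho).
Variables (PA : Ob C) (inA : P T (prod A PA)) (Hpow : is_strong_power inA).
Variables (X : Ob C) (m : Hom C X PA) (Hm : is_full_comprehension (class_pred inA rho) m).

Lemma rho_refl {V} (u : Hom C V A) : Hd (pair u u) rho.
Proof. eapply Hd_mono; [exact HT|apply (proj1 Hrho)|]. apply Hd_delta; reflexivity. Qed.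

Lemma rho_sym {V} (u v : Hom C V A) : Hd (pair u v) rho -> Hd (pair v u) rho.
Proof.
  intro H0. eapply Hd_mono in H0; [|exact HT|apply (proj1 (proj2 Hrho))].
  apply Hd_comp in H0; [|exact HT]. revert H0. ceq.
Qed.

Lemma rho_trans {V} (u v w : Hom C V A) : Hd (pair u v) rho -> Hd (pair v w) rho -> Hd (pair u w) rho.
Proof.
  intros H1 H2.
  assert (H3 : Hd (pair (pair u v) w) (meet (rdx (pair (@pi1 C A A A) pi2) rho) (rdx (pair (@pi2 C A A A) pi3) rho))).
  { apply Hd_meet; [exact HT|]. split; apply Hd_comp; try exact HT; ceq; assumption. }
  eapply Hd_mono in H3; [|exact HT|apply (proj2 (proj2 Hrho))].
  apply Hd_comp in H3; [|exact HT]. revert H3. ceq.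
Qed.


Variables (c : Hom C A PA) (Hc : rho = rdx (fx (idm A) c) inA).

Lemma c_spec {V} (a b : Hom C V A) : Hd (pair a (comp c b)) inA <-> Hd (pair a b) rho.
Proof. rewrite Hc, Hd_comp by exact HT. ceq; tauto. Qed.

Lemma power_ext {W} (U U' : Hom C W PA) :
  (forall V (h : Hom C V W) (a : Hom C V A), Hd (pair a (comp U h)) inA <-> Hd (pair a (comp U' h)) inA) -> U = U'.
Proof.
  intro H0. apply Hd_delta. rewrite (proj2 Hpow). apply all_intro'; [exact HT|apply pb_23|].
  intros V h e Heq. destr3 e.
  assert (E1 := f_equal (comp p1) Heq). assert (E2 := f_equal (comp p2) Heq).
  csimp_in E1; csimp_in E2.
  apply Hd_biimp_intro; [exact HT|exact Hfc|]. intros V' h'.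
  rewrite !Hd_comp by exact HT. csimp. rewrite <- ?comp_assoc in E1, E2. rewrite E1, E2. rewrite <- !comp_assoc. apply H0.
Qed.

Definition psi0 : P T (prod A PA) :=
  meet inA (all (pair (@pi1 C A A PA) pi3)
    (biimp (rdx (pair (@pi1 C A A PA) pi2) rho) (rdx (pair (@pi2 C A A PA) pi3) inA))).

Lemma class_witness {V} (a : Hom C V A) (U : Hom C V PA) : Hd (pair a U) psi0 -> U = comp c a.
Proof.
  intro H0. apply Hd_meet in H0; [|exact HT]. destruct H0 as [_ H0].
  apply power_ext. intros V' h a'.
  rewrite <- comp_assoc, c_spec.
  assert (H1 := all_elim' HT _ _ h (pair (pair (comp a h) a') (comp U h)) _ H0).
  assert (H2 : Hd (pair (pair (comp a h) a') (comp U h))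
       (biimp (rdx (pair (@pi1 C A A PA) pi2) rho) (rdx (pair (@pi2 C A A PA) pi3) inA))).
  { apply H1. ceq. }
  apply Hd_biimp_elim in H2; try exact HT; try exact Hfc.
  rewrite !Hd_comp in H2 by exact HT. revert H2. csimp. intro H2.
  split; intro H3; [apply rho_sym; apply H2; exact H3 | apply H2; apply rho_sym; exact H3].
Qed.

Lemma c_sigma : Hd c (class_pred inA rho).
Proof.
  unfold class_pred. rewrite <- (pair_p2 (idm A) c). apply ex_intro'; [exact HT|].
  fold psi0. unfold psi0. apply Hd_meet; [exact HT|]. split.
  - rewrite <- (comp_id_r c) at 1. apply c_spec. apply rho_refl.
  - apply all_intro'; [exact HT|apply pb_13|]. intros V h e Heq. destr3 e.
    assert (E1 := f_equal (comp p1) Heq). assert (E2 := f_equal (comp p2) Heq).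
    csimp_in E1; csimp_in E2.
    apply Hd_biimp_intro; [exact HT|exact Hfc|]. intros V' h'.
    rewrite !Hd_comp by exact HT. csimp. rewrite <- ?comp_assoc in E1, E2. rewrite E1, E2.
    rewrite <- comp_assoc, c_spec. split; apply rho_sym.
Qed.


Lemma m_mono {V} (g1 g2 : Hom C V X) : comp m g1 = comp m g2 -> g1 = g2.
Proof.
  intro E. destruct Hm as [Hm1 [Hm2 _]].
  assert (Ht : rdx (comp m g1) (class_pred inA rho) = top).
  { rewrite (rdx_comp HT), Hm1. apply (rdx_top HT). }
  destruct (Hm2 _ _ Ht) as [g [_ Hg]].
  rewrite <- (Hg g1 eq_refl). apply Hg. symmetry; exact E.
Qed.

Variables (q : Hom C A X) (Hq : comp m q = c).

Lemma sigma_elim {W} (x : Hom C W X) (phi : P T W) :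
  (forall V (h : Hom C V W) (a : Hom C V A), comp x h = comp q a -> Hd h phi) -> le top phi.
Proof.
  intro H0. destruct Hm as [Hm1 _].
  assert (Hs : Hd (comp m x) (class_pred inA rho)).
  { apply (Hd_pre HT). apply Hd_top_eq; exact Hm1. }
  unfold class_pred in Hs. fold psi0 in Hs.
  apply (ex_elim' HT Hfc _ _ _ _ (pb_p2 A PA) Hs).
  intros V h e Heq He. destr2n e a U. csimp_in Heq. rewrite Heq in He.
  apply class_witness in He. apply (H0 V h a). apply m_mono.
  rewrite He, <- Hq. symmetry. apply comp_assoc.
Qed.

Lemma part_a : rho = rdx (fx q q) (delta X).
Proof.
  apply le_antisym; apply (key Hfc); intros V h; destr2n h a1 a2; rewrite ?Hd_comp by exact HT; csimp;
    rewrite <- Hd_delta.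
  - intro H1. apply m_mono. rewrite !comp_assoc, Hq. apply power_ext. intros V' h' a.
    rewrite <- !comp_assoc, !c_spec.
    assert (H2 : Hd (pair (comp a1 h') (comp a2 h')) rho).
    { rewrite <- comp_pair. apply (Hd_pre HT); exact H1. }
    split; intro H3; eauto using rho_trans, rho_sym.
  - intro E. assert (E' : comp c a1 = comp c a2) by (rewrite <- Hq, <- !comp_assoc, E; reflexivity).
    apply c_spec. rewrite <- E'. apply c_spec. apply rho_refl.
Qed.


Section PartB.
Variables (Y : Ob C) (f : Hom C A Y) (Hf : le rho (rdx (fx f f) (delta Y))).

Lemma f_resp {V} (a1 a2 : Hom C V A) : Hd (pair a1 a2) rho -> comp f a1 = comp f a2.
Proof.
  intro H1. eapply Hd_mono in H1; [|exact HT|exact Hf]. apply Hd_comp in H1; [|exact HT].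
  apply Hd_delta. revert H1. csimp. auto.
Qed.

Lemma q_uniq (g1 g2 : Hom C X Y) : comp g1 q = f -> comp g2 q = f -> g1 = g2.
Proof.
  intros G1 G2. apply Hd_delta. unfold Hd. apply (sigma_elim (idm X)).
  intros V h a E. rewrite comp_id_l in E. apply Hd_comp; [exact HT|]. csimp.
  apply Hd_delta. rewrite E, !comp_assoc, G1, G2. reflexivity.
Qed.

Definition F : P T (prod X Y) :=
  ex (@p2 C A (prod X Y)) (rdx (pair (pair (comp q p1) (comp f p1)) p2) (delta (prod X Y))).

Lemma F_intro {V} (a : Hom C V A) : Hd (pair (comp q a) (comp f a)) F.
Proof.
  replace (pair (comp q a) (comp f a)) with (comp p2 (pair a (pair (comp q a) (comp f a)))) by (csimp; reflexivity).
  apply ex_intro'; [exact HT|]. apply Hd_comp; [exact HT|]. csimp. apply Hd_delta. reflexivity.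
Qed.

Lemma F_elim {W} (x : Hom C W X) (y : Hom C W Y) (phi : P T W) : Hd (pair x y) F ->
  (forall V (h : Hom C V W) (a : Hom C V A), comp x h = comp q a -> comp y h = comp f a -> Hd h phi) ->
  le top phi.
Proof.
  intros H1 H0. apply (ex_elim' HT Hfc _ _ _ _ (pb_p2 A (prod X Y)) H1).
  intros V h e Heq He. destr2n e a z. csimp_in Heq. rewrite Heq in He.
  apply Hd_comp in He; [|exact HT]. csimp_in He. apply Hd_delta in He.
  assert (E1 := f_equal (comp p1) He). assert (E2 := f_equal (comp p2) He). csimp_in E1; csimp_in E2.
  apply (H0 V h a); symmetry; assumption.
Qed.

Lemma part_b : exists! g : Hom C X Y, comp g q = f.
Proof.
  assert (C1 : le top (ex p1 F)).
  { apply (sigma_elim (idm X)). intros V h a E. rewrite comp_id_l in E. rewrite E.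
    replace (comp q a) with (comp p1 (pair (comp q a) (comp f a))) by (csimp; reflexivity).
    apply ex_intro'; [exact HT|]. apply F_intro. }
  assert (C2 : le (meet (rdx (pair (@pi1 C X Y Y) pi2) F) (rdx (pair (@pi1 C X Y Y) pi3) F))
       (rdx (pair (@pi2 C X Y Y) pi3) (delta Y))).
  { apply (key Hfc). intros V h H1. destr3n h x y1 y2.
    apply Hd_meet in H1; [|exact HT]. destruct H1 as [H1 H2].
    apply Hd_comp in H1; [|exact HT]. apply Hd_comp in H2; [|exact HT]. csimp_in H1. csimp_in H2.
    apply Hd_comp; [exact HT|]. csimp.
    apply (F_elim _ _ _ H1). intros V' k a E1 E2.
    assert (H3 : Hd (pair (comp x k) (comp y2 k)) F).
    { rewrite <- comp_pair. apply (Hd_pre HT). exact H2. }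
    apply (F_elim _ _ _ H3). intros V'' k' a' E3 E4.
    rewrite !Hd_comp by exact HT. csimp. apply Hd_delta.
    rewrite !comp_assoc, E2, E4, <- comp_assoc. apply f_resp.
    rewrite part_a. apply Hd_comp; [exact HT|]. csimp. apply Hd_delta.
    rewrite comp_assoc, <- E1, E3. reflexivity. }
  destruct (Hcc _ _ F C1 C2) as [g Hg].
  exists g. split.
  - apply Hd_delta. assert (H1 := F_intro (idm A)). rewrite Hg in H1.
    apply Hd_comp in H1; [|exact HT]. revert H1. csimp. auto.
  - intros g' Hg'. apply q_uniq; [|exact Hg']. apply Hd_delta. assert (H1 := F_intro (idm A)). rewrite Hg in H1.
    apply Hd_comp in H1; [|exact HT]. revert H1. csimp. auto.
Qed.
End PartB.

End Main.

Theorem mainTheorem9 (C : PCat) (T : TriposData C) :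
  is_tripos T ->
  extensional T -> cauchy_complete T -> has_full_comprehensions T ->
  has_strong_power_objects T ->
  has_effective_quotients T /\
  (forall (A : Ob C) (rho : P T (prod A A)), equiv_rel rho ->
   forall (PA : Ob C) (inA : P T (prod A PA)), is_strong_power inA ->
   forall (X : Ob C) (m : Hom C X PA), is_full_comprehension (class_pred inA rho) m ->
   exists q : Hom C A X, is_effective_quotient rho q).
Proof.
  intros HT Hext Hcc Hfc Hsp.
  assert (Main : forall (A : Ob C) (rho : P T (prod A A)), equiv_rel rho ->
   forall (PA : Ob C) (inA : P T (prod A PA)), is_strong_power inA ->
   forall (X : Ob C) (m : Hom C X PA), is_full_comprehension (class_pred inA rho) m ->
   exists q : Hom C A X, is_effective_quotient rho q).
  { intros A rho Hrho PA inA Hpow X m Hm.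
    destruct (proj1 Hpow A rho) as [c Hc].
    assert (Hs := c_sigma HT Hext Hfc A rho Hrho PA inA c Hc).
    destruct Hm as [Hm1 [Hm2 Hm3]] eqn:EHm.
    destruct (Hm2 A c (proj1 (Hd_top_eq _ _) Hs)) as [q [Hq _]].
    exists q. split.
    - exact (part_a HT Hext Hfc A rho Hrho PA inA Hpow X m Hm c Hc q Hq).
    - intros Y f Hf. exact (part_b HT Hext Hcc Hfc A rho Hrho PA inA Hpow X m Hm c Hc q Hq Y f Hf). }
  split; [|exact Main].
  intros A rho Hrho. destruct (Hsp A) as [PA [inA Hpow]].
  destruct (Hfc _ (class_pred inA rho)) as [X [m Hm]].
  exists X. exact (Main A rho Hrho PA inA Hpow X m Hm).
Qed.
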